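(* Let $X$ be a Banach lattice and $E_1,E_2\colon X\to\mathbb R\cup\{+\infty\}$ two proper convex functions such that $E_1\ll_{\mathrm P}E_2$. Then $E_2^*\ll_{\mathrm Q}E_1^*$. In particular, if $E\colon X\to\mathbb R\cup\{+\infty\}$ is a submodular proper convex function, then $E^*$ is substitutable.
   Context: A Banach lattice is a Banach space with a lattice partial order (inf/sup $\wedge,\vee$) compatible with addition and nonnegative scaling and with $|\phi_1|\leq|\phi_2|\Rightarrow\|\phi_1\|\leq\|\phi_2\|$ ($\phi^+=\phi\vee0$, $\phi^-=-(\phi\wedge0)$, $|\phi|=\phi^++\phi^-$). $X^*$ carries the dual order ($\mu\leq\nu$ iff $\langle\mu,\phi\rangle\leq\langle\nu,\phi\rangle$ for all $\phi\geq0$), making it a Banach lattice; $[a,b]=\{m:a\leq m\leq b\}$. $E^*(\mu)=\sup_{\phi\in X}\langle\mu,\phi\rangle-E(\phi)$. $E_1\ll_{\mathrm P}E_2$ means $E_1(\phi_1\wedge\phi_2)+E_2(\phi_1\vee\phi_2)\leq E_1(\phi_1)+E_2(\phi_2)$ for all $\phi_1,\phi_2$; $E$ is submodular if $E\ll_{\mathrm P}E$. For $F_1,F_2\colon X^*\to\mathbb R\cup\{+\infty\}$, $F_2\ll_{\mathrm Q}F_1$ means: for all $\mu_1,\mu_2\in X^*$ and every $t_{21}\in[0,(\mu_2-\mu_1)^+]$ there exists $t_{12}\in[0,(\mu_1-\mu_2)^+]$ with $F_1(\mu_1+t_{21}-t_{12})+F_2(\mu_2-t_{21}+t_{12})\leq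 F_1(\mu_1)+F_2(\mu_2)$; $F$ is substitutable if $F\ll_{\mathrm Q}F$. *)

(* Defs.v *)
From mathcomp Require Import all_boot all_order all_algebra.
From mathcomp Require Import all_classical all_reals all_analysis.
Set Implicit Arguments. Unset Strict Implicit. Unset Printing Implicit Defensive.
Import Order.TTheory GRing.Theory Num.Theory.
Import numFieldNormedType.Exports.
Local Open Scope classical_set_scope.
Local Open Scope ring_scope.

Section BanachLattice.
Variables (R : realType) (V : completeNormedModType R).
Variables (le : V -> V -> Prop) (meet join : V -> V -> V).

Definition lat_abs (x : V) : V := join x 0 + - meet x 0.

Record is_banach_lattice : Prop := {
  bl_refl : forall x, le x x;
  bl_antisym : forall x y, le x y -> le y x -> x = y;
  bl_trans : forall x y z, le x y -> le y z -> le x z;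
  bl_meet_l : forall x y, le (meet x y) x;
  bl_meet_r : forall x y, le (meet x y) y;
  bl_meet_glb : forall x y z, le z x -> le z y -> le z (meet x y);
  bl_join_l : forall x y, le x (join x y);
  bl_join_r : forall x y, le y (join x y);
  bl_join_lub : forall x y z, le x z -> le y z -> le (join x y) z;
  bl_add : forall x y z, le x y -> le (x + z) (y + z);
  bl_scale : forall (t : R) x y, 0 <= t -> le x y -> le (t *: x) (t *: y);
  bl_norm : forall x y, le (lat_abs x) (lat_abs y) -> `|x| <= `|y|
}.

Definition is_dual (mu : V -> R) : Prop :=
  (forall (a : R) (x y : V), mu (a *: x + y) = a * mu x + mu y) /\
  continuous mu.

Definition dual_le (mu nu : V -> R) : Prop :=
  forall phi, le 0 phi -> mu phi <= nu phi.

Definition dual_is_sup (p a b : V -> R) : Prop :=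
  is_dual p /\ dual_le a p /\ dual_le b p /\
  forall q, is_dual q -> dual_le a q -> dual_le b q -> dual_le p q.

Definition dual_pos_part (p mu : V -> R) : Prop :=
  dual_is_sup p mu (fun _ => 0).

Definition dual_in_interval (m a b : V -> R) : Prop :=
  is_dual m /\ dual_le a m /\ dual_le m b.

Local Open Scope ereal_scope.

Definition proper_fun (E : V -> \bar R) : Prop :=
  (forall x, E x <> -oo) /\ (exists x, E x <> +oo).

Definition convex_fun (E : V -> \bar R) : Prop :=
  forall (x y : V) (t : R), (0 < t < 1)%R ->
    E (t *: x + (1 - t) *: y)%R <= t%:E * E x + (1 - t)%:E * E y.

Definition conjugate (E : V -> \bar R) (mu : V -> R) : \bar R :=
  ereal_sup [set (mu phi)%:E - E phi | phi in [set: V]].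

Definition lessP (E1 E2 : V -> \bar R) : Prop :=
  forall phi1 phi2 : V,
    E1 (meet phi1 phi2) + E2 (join phi1 phi2) <= E1 phi1 + E2 phi2.

Definition submodular (E : V -> \bar R) : Prop := lessP E E.

Definition lessQ (F2 F1 : (V -> R) -> \bar R) : Prop :=
  forall mu1 mu2 : V -> R, is_dual mu1 -> is_dual mu2 ->
  forall p21, dual_pos_part p21 (fun x => mu2 x - mu1 x)%R ->
  forall t21, dual_in_interval t21 (fun _ => 0%R) p21 ->
  exists p12 t12,
    dual_pos_part p12 (fun x => mu1 x - mu2 x)%R /\
    dual_in_interval t12 (fun _ => 0%R) p12 /\
    F1 (fun x => mu1 x + t21 x - t12 x)%R + F2 (fun x => mu2 x - t21 x + t12 x)%R
      <= F1 mu1 + F2 mu2.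

Definition substitutable (F : (V -> R) -> \bar R) : Prop := lessQ F F.

End BanachLattice.

(* Main.v *)
Require Import Defs.
From HB Require Import structures.
From mathcomp Require Import all_boot all_order all_algebra.
From mathcomp Require Import all_classical all_reals all_analysis.
From mathcomp Require Import lra ring.
Set Implicit Arguments. Unset Strict Implicit. Unset Printing Implicit Defensive.
Import Order.TTheory GRing.Theory Num.Theory.
Import numFieldNormedType.Exports.
Local Open Scope classical_set_scope.
Local Open Scope ring_scope.
Definition sublin (R : realType) (V : lmodType R) (p : V -> R) :=
  (forall x y, p (x + y) <= p x + p y) /\ (forall c x, 0 < c -> p (c *: x) <= c * p x).

Lemma sublin0 (R : realType) (V : lmodType R) (p : V -> R) : sublin p -> p 0 = 0.
Proof.
move=> [hD hZ]; apply/eqP; rewrite eq_le; apply/andP; split.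
  have := hZ (2^-1) 0 ltac:(by rewrite invr_gt0 ltr0n); rewrite scaler0.
  by move=> h; have : p 0 <= 0 by nra.
have := hD 0 0; rewrite addr0 => h; lra.
Qed.

Lemma sublinZ (R : realType) (V : lmodType R) (p : V -> R) c x :
  sublin p -> 0 <= c -> p (c *: x) = c * p x.
Proof.
move=> hp; rewrite le_eqVlt => /orP[/eqP<-|c0].
  by rewrite scale0r mul0r sublin0.
apply/eqP; rewrite eq_le hp.2 //=.
have := hp.2 c^-1 (c *: x) ltac:(by rewrite invr_gt0).
rewrite scalerA mulVf ?gt_eqF // scale1r => h.
have ci : 0 < c^-1 by rewrite invr_gt0.
by rewrite -(ler_pM2l ci) mulrA mulVf ?gt_eqF // mul1r.
Qed.

Lemma sublin_lb (R : realType) (V : lmodType R) (p : V -> R) x :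
  sublin p -> - p (- x) <= p x.
Proof. by move=> hp; have := hp.1 x (-x); rewrite subrr sublin0 // => h; lra. Qed.
Definition mo_set (R : realType) (V : lmodType R) (p : V -> R) (G : V -> R -> Prop) (x : V) : set R :=
  [set y | exists l d a, [/\ 0 <= l, G d a & y = p (x + l *: d) - l * a]].
Definition mo (R : realType) (V : lmodType R) (p : V -> R) (G : V -> R -> Prop) (x : V) : R :=
  inf (mo_set p G x).

Lemma mo_lb (R : realType) (V : lmodType R) (p : V -> R) (G : V -> R -> Prop) x :
  sublin p -> (forall d a, G d a -> a <= p d) -> lbound (mo_set p G x) (- p (- x)).
Proof.
move=> hp hG y [l [d [a [l0 Gda ->]]]].
have h1 : l * a <= p (l *: d) by rewrite sublinZ // ler_wpM2l // hG.
have h2 := hp.1 (x + l *: d) (- x).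
rewrite addrC addKr in h2.
lra.
Qed.

Lemma mo_le (R : realType) (V : lmodType R) (p : V -> R) (G : V -> R -> Prop) x y :
  sublin p -> (forall d a, G d a -> a <= p d) -> mo_set p G x y -> mo p G x <= y.
Proof.
move=> hp hG hy; apply: ge_inf => //; exists (- p (- x)); exact: mo_lb.
Qed.

Lemma mo_ge (R : realType) (V : lmodType R) (p : V -> R) (G : V -> R -> Prop) x z :
  (exists d a, G d a) -> (forall y, mo_set p G x y -> z <= y) -> z <= mo p G x.
Proof.
move=> [d [a Gda]] hz; apply: lb_le_inf => //.
by exists (p (x + 0 *: d) - 0 * a); exists 0, d, a; split.
Qed.

Lemma mo_sublin (R : realType) (V : lmodType R) (p : V -> R) (G : V -> R -> Prop) :
  sublin p -> (forall d a, G d a -> a <= p d) -> (exists d a, G d a) ->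
  (forall d1 a1 d2 a2 t, G d1 a1 -> G d2 a2 -> 0 < t < 1 ->
     exists d a, [/\ G d a, d = t *: d1 + (1 - t) *: d2 & t * a1 + (1 - t) * a2 <= a]) ->
  [/\ sublin (mo p G), (forall x, mo p G x <= p x) & (forall d a, G d a -> mo p G (- d) <= - a)].
Proof.
move=> hp hG hne hconv; split.
- split.
  + move=> x y.
    have key : forall u v, mo_set p G x u -> mo_set p G y v -> mo p G (x + y) <= u + v.
      move=> _ _ [l1 [d1 [a1 [l10 G1 ->]]]] [l2 [d2 [a2 [l20 G2 ->]]]].
      move: l10; rewrite le_eqVlt => /orP[/eqP l10|l10].
        subst l1; rewrite scale0r addr0 mul0r subr0.
        have hm : mo_set p G (x + y) (p (x + y + l2 *: d2) - l2 * a2) by exists l2, d2, a2; split.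
        apply: le_trans (mo_le hp hG hm) _.
        by rewrite -addrA; have := hp.1 x (y + l2 *: d2); lra.
      move: l20; rewrite le_eqVlt => /orP[/eqP l20|l20].
        subst l2; rewrite scale0r addr0 mul0r subr0.
        have hm : mo_set p G (x + y) (p (x + y + l1 *: d1) - l1 * a1) by exists l1, d1, a1; split => //; exact: ltW.
        apply: le_trans (mo_le hp hG hm) _.
        by rewrite addrAC; have := hp.1 (x + l1 *: d1) y; lra.
      have L0 : 0 < l1 + l2 by rewrite addr_gt0.
      have t01 : 0 < l1 / (l1 + l2) < 1.
        by rewrite divr_gt0 //= ltr_pdivrMr // mul1r ltrDl.
      have [d [a [Gda dE aE]]] := hconv _ _ _ _ _ G1 G2 t01.
      move: dE aE t01; set t := l1 / (l1 + l2) => dE aE t01.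
      have e1 : (l1 + l2) * t = l1 by rewrite /t mulrC divfK // gt_eqF.
      have e2 : (l1 + l2) * (1 - t) = l2 by rewrite mulrBr mulr1 e1; lra.
      clearbody t.
      have hd : (l1 + l2) *: d = l1 *: d1 + l2 *: d2.
        by rewrite dE scalerDr !scalerA e1 e2.
      have ha : l1 * a1 + l2 * a2 <= (l1 + l2) * a.
        have := ler_wpM2l (ltW L0) aE; rewrite mulrDr !mulrA.
        by rewrite e1 e2.
      have hm : mo_set p G (x + y) (p (x + y + (l1 + l2) *: d) - (l1 + l2) * a).
        by exists (l1 + l2), d, a; split => //; exact: ltW.
      apply: le_trans (mo_le hp hG hm) _.
        rewrite hd.
        have -> : x + y + (l1 *: d1 + l2 *: d2) = (x + l1 *: d1) + (y + l2 *: d2).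
          by rewrite addrACA.
        by have := hp.1 (x + l1 *: d1) (y + l2 *: d2); lra.
    have h1 : mo p G (x + y) - mo p G y <= mo p G x.
      apply: mo_ge => // u hu.
      suff : mo p G (x + y) - u <= mo p G y by lra.
      apply: mo_ge => // v hv.
      by have := key _ _ hu hv; lra.
    lra.
  + move=> c x c0.
    suff : mo p G (c *: x) / c <= mo p G x.
      by rewrite ler_pdivrMr // mulrC.
    apply: mo_ge => // _ [l [d [a [l0 Gda ->]]]].
    rewrite ler_pdivrMr //.
    have hm : mo_set p G (c *: x) (p (c *: x + (c * l) *: d) - (c * l) * a).
      by exists (c * l), d, a; split => //; exact: mulr_ge0 (ltW c0) l0.
    apply: le_trans (mo_le hp hG hm) _.
    rewrite -scalerA -scalerDr sublinZ //; last exact: ltW.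
    by rewrite le_eqVlt; apply/orP; left; apply/eqP; ring.
- move=> x; have [d [a Gda]] := hne; apply: mo_le => //.
  by exists 0, d, a; split => //; rewrite scale0r addr0 mul0r subr0.
- move=> d a Gda; apply: mo_le => //; exists 1, d, a; split => //.
  by rewrite scale1r addNr sublin0 // mul1r sub0r.
Qed.

Lemma hahn_banach (R : realType) (V : lmodType R) (p : V -> R) : sublin p ->
  exists f : V -> R, (forall a x y, f (a *: x + y) = a * f x + f y) /\ (forall x, f x <= p x).
Proof.
move=> hp.
pose T := {r : V -> R | sublin r /\ forall x, r x <= p x}.
pose Rl : rel T := fun r s => `[< forall x, sval s x <= sval r x >].
have t0 : T := exist _ p (conj hp (fun x => lexx _)).
have [qq qmax] : exists t, premaximal Rl t.
  apply: (ZL_preorder t0).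
  - by move=> r; apply/asboolP => x.
  - move=> r s t /asboolP hrs /asboolP hst; apply/asboolP => x; exact: le_trans (hst x) (hrs x).
  - move=> A Atot.
    pose Mem : set (V -> R) := [set f | f = p \/ exists2 r, A r & f = sval r].
    have Msub : forall f, Mem f -> sublin f /\ forall x, f x <= p x.
      move=> f [->|[r _ ->]]; [split=>// x; exact: lexx | exact: (svalP r)].
    have Mch : forall f g, Mem f -> Mem g -> (forall x, f x <= g x) \/ (forall x, g x <= f x).
      move=> f g Mf Mg.
      case: Mf => [->|[r Ar ->]]; first by right => x; exact: (Msub g Mg).2.
      case: Mg => [->|[s As ->]]; first by left => x; exact: (svalP r).2.
      by case: (Atot _ _ Ar As) => /asboolP h; [right|left].
    pose S x : set R := [set f x | f in Mem].
    pose m x := inf (S x).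
    have Sne : forall x, nonempty (S x) by move=> x; exists (p x); exists p => //; left.
    have Slb : forall x, has_lbound (S x).
      move=> x; exists (- p (- x)) => _ [f Mf <-].
      have [hf hfp] := Msub f Mf; have := sublin_lb x hf; have := hfp (-x); lra.
    have mle : forall x f, Mem f -> m x <= f x.
      by move=> x f Mf; apply: ge_inf => //; exists f.
    have mge : forall x z, (forall f, Mem f -> z <= f x) -> z <= m x.
      by move=> x z hz; apply: lb_le_inf => // _ [f Mf <-]; exact: hz.
    have msub : sublin m /\ forall x, m x <= p x.
      split; last by move=> x; apply: (mle); left.
      split.
      + move=> x y.
        have key : forall f g, Mem f -> Mem g -> m (x + y) <= f x + g y.
          move=> f g Mf Mg; case: (Mch f g Mf Mg) => h.
          * apply: le_trans (mle _ _ Mf) _; have := (Msub f Mf).1.1 x y; have := h y; lra.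
          * apply: le_trans (mle _ _ Mg) _; have := (Msub g Mg).1.1 x y; have := h x; lra.
        have : m (x + y) - m y <= m x.
          apply: (mge) => f Mf; suff : m (x + y) - f x <= m y by lra.
          apply: (mge) => g Mg; have := key f g Mf Mg; lra.
        lra.
      + move=> c x c0.
        suff : m (c *: x) / c <= m x by rewrite ler_pdivrMr // mulrC.
        apply: (mge) => f Mf; rewrite ler_pdivrMr //.
        apply: le_trans (mle _ _ Mf) _; rewrite mulrC; exact: (Msub f Mf).1.2.
    exists (exist _ m msub) => r Ar; apply/asboolP => x /=.
    by apply: (mle); right; exists r.
have [hq hqp] := svalP qq.
have qodd : forall y, sval qq (- y) <= - sval qq y.
  move=> y.
  pose G : V -> R -> Prop := fun d a => d = y /\ a = sval qq y.
  have [hs hle hG] := @mo_sublin R V (sval qq) G hq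
    ltac:(by move=> d a [-> ->]) ltac:(by exists y, (sval qq y))
    ltac:(move=> d1 a1 d2 a2 t [-> ->] [-> ->] _; exists y, (sval qq y); split => //;
          [by rewrite -scalerDl addrC subrK scale1r | by rewrite -mulrDl addrC subrK mul1r]).
  pose r : T := exist _ (mo (sval qq) G) (conj hs (fun x => le_trans (hle x) (hqp x))).
  have : Rl qq r by apply/asboolP.
  move/qmax/asboolP => /(_ (-y)) h.
  exact: le_trans h (hG y (sval qq y) (conj erefl erefl)).
have qN : forall y, sval qq (- y) = - sval qq y.
  move=> y; apply/le_anti; rewrite qodd /=; have := sublin_lb y hq; lra.
have qD : forall x y, sval qq (x + y) = sval qq x + sval qq y.
  move=> x y; apply/le_anti; rewrite hq.1 /=.
  have := hq.1 (x + y) (- y); rewrite addrK qN; lra.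
have qZ : forall a x, sval qq (a *: x) = a * sval qq x.
  move=> a x; have [a0|a0] := leP 0 a; first exact: sublinZ.
  have -> : a *: x = (- a) *: (- x) by rewrite scaleNr scalerN opprK.
  rewrite sublinZ ?qN; [by rewrite mulrNN | exact: hq | by rewrite oppr_ge0 ltW].
exists (sval qq); split; last exact: hqp.
by move=> a x y; rewrite qD qZ.
Qed.

Lemma mazur_orlicz (R : realType) (V : lmodType R) (p : V -> R) (G : V -> R -> Prop) :
  sublin p -> (forall d a, G d a -> a <= p d) -> (exists d a, G d a) ->
  (forall d1 a1 d2 a2 t, G d1 a1 -> G d2 a2 -> 0 < t < 1 ->
     exists d a, [/\ G d a, d = t *: d1 + (1 - t) *: d2 & t * a1 + (1 - t) * a2 <= a]) ->
  exists f : V -> R, [/\ forall a x y, f (a *: x + y) = a * f x + f y,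
    forall x, f x <= p x & forall d a, G d a -> a <= f d].
Proof.
move=> hp hG hne hconv.
have [hs hle hGm] := mo_sublin hp hG hne hconv.
have [f [flin fle]] := hahn_banach hs.
exists f; split => //.
  by move=> x; exact: le_trans (fle x) (hle x).
move=> d a Gda; have := le_trans (fle (- d)) (hGm d a Gda).
have f0 : f 0 = 0 by have := flin 1 0 0; rewrite scale1r addr0 mul1r => h; lra.
have -> : f (- d) = - f d by have := flin (-1) d 0; rewrite addr0 scaleN1r f0 addr0 mulN1r.
lra.
Qed.
Lemma is_dual_comb (R : realType) (V : completeNormedModType R) (f g : V -> R) (a b : R) :
  is_dual f -> is_dual g -> is_dual (fun x => a * f x + b * g x).
Proof.
move=> [fl fc] [gl gc]; split.
  by move=> c x y; rewrite fl gl; ring.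
move=> x.
apply: cvgD.
  by apply: cvgM; [exact: cvg_cst | exact: fc].
by apply: cvgM; [exact: cvg_cst | exact: gc].
Qed.

Lemma is_dual_ext (R : realType) (V : completeNormedModType R) (f g : V -> R) :
  (forall x, f x = g x) -> is_dual f -> is_dual g.
Proof. by move=> h; have -> : g = f by apply/funext => x; rewrite h. Qed.

Lemma is_dual0 (R : realType) (V : completeNormedModType R) : is_dual (fun _ : V => 0 : R).
Proof. by split; [move=> *; rewrite mulr0 addr0 | move=> x; exact: cvg_cst]. Qed.

Section Lin.
Variables (R : realType) (V : lmodType R) (f : V -> R).
Hypothesis fl : forall a x y, f (a *: x + y) = a * f x + f y.
Lemma lin0 : f 0 = 0.
Proof. by have := fl 1 0 0; rewrite scale1r addr0 mul1r => h; lra. Qed.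
Lemma linD x y : f (x + y) = f x + f y.
Proof. by have := fl 1 x y; rewrite scale1r mul1r. Qed.
Lemma linN x : f (- x) = - f x.
Proof. by have := fl (-1) x 0; rewrite addr0 scaleN1r lin0 addr0 mulN1r. Qed.
Lemma linB x y : f (x - y) = f x - f y.
Proof. by rewrite linD linN. Qed.
Lemma linZ c x : f (c *: x) = c * f x.
Proof. by have := fl c x 0; rewrite !addr0 lin0 addr0. Qed.
End Lin.

Section Lat.
Variables (R : realType) (V : completeNormedModType R).
Variables (le : V -> V -> Prop) (meet join : V -> V -> V).
Hypothesis HX : is_banach_lattice le meet join.

Lemma le_sub0 x y : le x y -> le 0 (y - x).
Proof. by move=> h; have := bl_add HX (- x) h; rewrite subrr. Qed.
Lemma le_of_sub0 x y : le 0 (y - x) -> le x y.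
Proof. by move=> h; have := bl_add HX x h; rewrite add0r subrK. Qed.
Lemma le_addl x y w : le x y -> le (w + x) (w + y).
Proof. by move=> h; have := bl_add HX w h; rewrite ![_ + w]addrC. Qed.

Lemma join_tr x y w : join (x + w) (y + w) = join x y + w.
Proof.
apply: (bl_antisym HX).
  by apply: (bl_join_lub HX); apply: (bl_add HX); [exact: (bl_join_l HX) | exact: (bl_join_r HX)].
have h : le (join x y) (join (x + w) (y + w) - w).
  apply: (bl_join_lub HX).
    by have := bl_add HX (- w) (bl_join_l HX (x + w) (y + w)); rewrite addrK.
  by have := bl_add HX (- w) (bl_join_r HX (x + w) (y + w)); rewrite addrK.
by have := bl_add HX w h; rewrite subrK.
Qed.

Lemma joinE x y : join x y = y + join (x - y) 0.
Proof. by rewrite (addrC y) -(join_tr (x - y) 0 y) subrK add0r. Qed.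

Lemma meet_join x y : meet x y = x + y - join x y.
Proof.
set M := meet x y; set J := join x y.
apply: (bl_antisym HX).
  have h : le J (x + y - M).
    apply: (bl_join_lub HX).
      have := bl_add HX (x - M) (bl_meet_r HX x y).
      by rewrite -/M [M + _]addrC subrK addrA (addrC y x).
    have := bl_add HX (y - M) (bl_meet_l HX x y).
    by rewrite -/M [M + _]addrC subrK addrA.
  have := bl_add HX (M - J) h.
  by rewrite [J + _]addrC subrK addrA subrK.
apply: (bl_meet_glb HX).
  have := le_addl (x - J) (bl_join_r HX x y).
  by rewrite -/J subrK addrAC.
have := le_addl (y - J) (bl_join_l HX x y).
by rewrite -/J subrK addrAC (addrC y x).
Qed.

Lemma meetE x y : meet x y = x - join (x - y) 0.
Proof. by rewrite meet_join joinE opprD addrA addrK. Qed.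

Lemma join_eq_l x y : le y x -> join x y = x.
Proof.
by move=> h; apply: (bl_antisym HX); [apply: (bl_join_lub HX) => //; exact: (bl_refl HX) | exact: (bl_join_l HX)].
Qed.
Lemma join_eq_r x y : le x y -> join x y = y.
Proof.
by move=> h; apply: (bl_antisym HX); [apply: (bl_join_lub HX) => //; exact: (bl_refl HX) | exact: (bl_join_r HX)].
Qed.
Lemma meet_eq_r x y : le y x -> meet x y = y.
Proof.
by move=> h; apply: (bl_antisym HX); [exact: (bl_meet_r HX) | apply: (bl_meet_glb HX) => //; exact: (bl_refl HX)].
Qed.

Lemma le_neg0 x : le 0 x -> le (- x) 0.
Proof. by move=> h; have := bl_add HX (- x) h; rewrite add0r subrr. Qed.

Lemma join_sub x y : le (join (x + y) 0) (join x 0 + join y 0).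
Proof.
apply: (bl_join_lub HX).
  apply: (bl_trans HX (bl_add HX y (bl_join_l HX x 0))).
  exact: le_addl (bl_join_l HX y 0).
have h1 := le_addl (join x 0) (bl_join_r HX y 0); rewrite addr0 in h1.
have h0 := bl_join_r HX x 0. exact (bl_trans HX h0 h1).
Qed.

Lemma join_scale c x : 0 < c -> join (c *: x) 0 = c *: join x 0.
Proof.
move=> c0; apply: (bl_antisym HX).
  apply: (bl_join_lub HX); first by apply: (bl_scale HX (ltW c0)); exact: (bl_join_l HX).
  by have := bl_scale HX (ltW c0) (bl_join_r HX x 0); rewrite scaler0.
have ci : 0 <= c^-1 by rewrite invr_ge0 ltW.
have h : le (join x 0) (c^-1 *: join (c *: x) 0).
  apply: (bl_join_lub HX).
    have := bl_scale HX ci (bl_join_l HX (c *: x) 0).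
    by rewrite scalerA mulVf ?gt_eqF // scale1r.
  by have := bl_scale HX ci (bl_join_r HX (c *: x) 0); rewrite scaler0.
have := bl_scale HX (ltW c0) h.
by rewrite scalerA mulfV ?gt_eqF // scale1r.
Qed.

Lemma norm_pos x : `|join x 0| <= `|x|.
Proof.
apply: (bl_norm HX); rewrite /lat_abs.
have h0 : le 0 (join x 0) by exact: (bl_join_r HX).
rewrite (join_eq_l h0) (meet_eq_r h0) oppr0 addr0.
have h : le 0 (- meet x 0) by have := le_sub0 (bl_meet_r HX x 0); rewrite sub0r.
by have := le_addl (join x 0) h; rewrite addr0.
Qed.
End Lat.

Lemma conj_ge (R : realType) (V : completeNormedModType R) (E : V -> \bar R) (mu : V -> R) phi :
  ((mu phi)%:E - E phi <= conjugate E mu)%E.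
Proof. by apply: ereal_sup_ubound; exists phi. Qed.

Lemma ereal_shift (R : realType) (r C : R) (z : \bar R) :
  (r%:E + z <= C%:E)%E -> (z <= (C - r)%:E)%E.
Proof.
case: z => [z||] //=; last by move=> _; exact: leNye.
by rewrite -EFinD !lee_fin => h; lra.
Qed.

Lemma conj_sum_le (R : realType) (V : completeNormedModType R) (E1 E2 : V -> \bar R)
   (nu1 nu2 : V -> R) (C : R) :
  (forall x, E1 x <> -oo%E) -> (exists x0 e0, E1 x0 = e0%:E) -> (exists y0 f0, E2 y0 = f0%:E) ->
  (forall x y, ((nu1 x)%:E - E1 x + ((nu2 y)%:E - E2 y) <= C%:E)%E) ->
  (conjugate E1 nu1 + conjugate E2 nu2 <= C%:E)%E.
Proof.
move=> E1n [x0 [e0 he0]] [y0 [f0 hf0]] H.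
have hS2 : (conjugate E2 nu2 <= (C - (nu1 x0 - e0))%:E)%E.
  apply: ge_ereal_sup => _ [y _ <-]; apply: ereal_shift.
  by have := H x0 y; rewrite he0 -EFinB.
have hS2' : ((nu2 y0 - f0)%:E <= conjugate E2 nu2)%E.
  by have := conj_ge E2 nu2 y0; rewrite hf0 -EFinB.
move: hS2 hS2'; case hc2 : (conjugate E2 nu2) => [s2||] //= hS2 hS2'.
have hS1 : (conjugate E1 nu1 <= (C - s2)%:E)%E.
  apply: ge_ereal_sup => _ [x _ <-].
  case hx : (E1 x) => [e||]; last by have := E1n x.
    have : (s2%:E <= (C - (nu1 x - e))%:E)%E.
      rewrite -hc2; apply: ge_ereal_sup => _ [y _ <-]; apply: ereal_shift.
      by have := H x y; rewrite hx -EFinB.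
    by rewrite -EFinB !lee_fin => h; lra.
  by rewrite /=; exact: leNye.
move: hS1; case: (conjugate E1 nu1) => [s1||] //=.
  by rewrite -EFinD !lee_fin => h; lra.
by move=> _; exact: leNye.
Qed.

Lemma dual_bound (R : realType) (V : completeNormedModType R) (mu : V -> R) :
  is_dual mu -> exists M, 0 < M /\ forall x, `|mu x| <= M * `|x|.
Proof.
move=> [lin cont].
pose muL : {linear V -> R^o} := HB.pack mu (GRing.isLinear.Build R V R^o *:%R mu (fun a x y => lin a x y)).
have := @continuous_linear_bounded R V R^o 0 muL (cont 0).
move=> /linear_boundedP /pinfty_ex_gt0 [r r0 Bf].
by exists r.
Qed.

Lemma dual_of_bound (R : realType) (V : completeNormedModType R) (f : V -> R) M :
  (forall a x y, f (a *: x + y) = a * f x + f y) -> (forall x, `|f x| <= M * `|x|) ->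
  is_dual f.
Proof.
move=> lin hb; split => //.
pose fL : {linear V -> R^o} := HB.pack f (GRing.isLinear.Build R V R^o *:%R f (fun a x y => lin a x y)).
have : continuous fL.
  apply: bounded_linear_continuous; apply/bounded_funP => r.
  exists (`|M| * r) => x xr.
  apply: le_trans (hb x) _.
  apply: le_trans (ler_wpM2r (normr_ge0 x) (ler_norm M)) _.
  by apply: ler_wpM2l => //; exact: normr_ge0.
by [].
Qed.

Lemma fin0 (R : realType) (z : \bar R) : z <> -oo%E -> z <> +oo%E -> exists e : R, z = e%:E.
Proof. by case: z => [e||] // _ _; exists e. Qed.

Lemma fin1 (R : realType) (z : \bar R) (r : R) : z <> -oo%E -> (z <= r%:E)%E -> exists e : R, z = e%:E.
Proof. by case: z => [e||] // _ _; exists e. Qed.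

Lemma fin2 (R : realType) (x y : \bar R) : x <> -oo%E -> y <> -oo%E -> (x + y)%E <> +oo%E ->
  exists a b : R, x = a%:E /\ y = b%:E.
Proof. by case: x => [a||] //; case: y => [b||] // _ _ _; exists a, b. Qed.

Lemma conj_nN (R : realType) (V : completeNormedModType R) (E : V -> \bar R) (mu : V -> R) x e :
  E x = e%:E -> conjugate E mu <> -oo%E.
Proof.
move=> he h; have := conj_ge E mu x; rewrite h he -EFinB.
by rewrite leeNy_eq.
Qed.

Lemma part1 (R : realType) (V : completeNormedModType R)
    (le : V -> V -> Prop) (meet join : V -> V -> V)
    (HX : is_banach_lattice le meet join) (E1 E2 : V -> \bar R) :
  proper_fun E1 -> convex_fun E1 -> proper_fun E2 -> convex_fun E2 ->
  lessP meet join E1 E2 -> lessQ le (conjugate E2) (conjugate E1).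
Proof.
move=> [E1n [x1 hx1]] hc1 [E2n [x2 hx2]] hc2 hP.
move=> mu1 mu2 hmu1 hmu2 p21 [hp21d [hp21a [hp21b hp21c]]] t21 [ht21d [ht21a ht21b]].
have l1 := hmu1.1; have l2 := hmu2.1; have lp := hp21d.1; have lt := ht21d.1.
pose p12 := fun x => p21 x - (mu2 x - mu1 x).
have hp12d : is_dual p12.
  apply: (is_dual_ext _ (is_dual_comb 1 (-1) hp21d (is_dual_comb 1 (-1) hmu2 hmu1))) => x.
  by rewrite /p12; ring.
have lp12 := hp12d.1.
have hp12 : dual_pos_part le p12 (fun x => mu1 x - mu2 x).
  split => //; split; [|split].
  - by move=> phi h0; have := hp21b phi h0; rewrite /p12 /=; lra.
  - by move=> phi h0; have := hp21a phi h0; rewrite /p12 /=; lra.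
  - move=> q hq hqa hqb phi h0.
    have hq' : is_dual (fun x => q x + (mu2 x - mu1 x)).
      apply: (is_dual_ext _ (is_dual_comb 1 1 hq (is_dual_comb 1 (-1) hmu2 hmu1))) => x.
      by ring.
    have ha : dual_le le (fun x => mu2 x - mu1 x) (fun x => q x + (mu2 x - mu1 x)).
      by move=> ph h; have := hqb ph h; rewrite /=; lra.
    have hb : dual_le le (fun _ => 0) (fun x => q x + (mu2 x - mu1 x)).
      by move=> ph h; have := hqa ph h; rewrite /=; lra.
    by have := hp21c _ hq' ha hb phi h0; rewrite /p12 /=; lra.
have [Cinf|Cfin] := boolP (conjugate E1 mu1 + conjugate E2 mu2 == +oo)%E.
  exists p12, (fun _ => 0); split => //; split.
    split; first exact: is_dual0.
    split; first by move=> phi _; exact: lexx.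
    exact: hp12.2.2.1.
  by rewrite (eqP Cinf) leey.
have [e1' he1'] := fin0 (E1n x1) hx1.
have [e2' he2'] := fin0 (E2n x2) hx2.
have [c1 [c2 [hc1' hc2']]] := fin2 (conj_nN (mu:=mu1) he1') (conj_nN (mu:=mu2) he2') (fun h => negP Cfin (introT eqP h)).
pose C := c1 + c2.
pose G : V -> R -> Prop := fun d a => exists phi1 phi2 e1 e2,
  [/\ E1 phi1 = e1%:E, E2 phi2 = e2%:E, d = phi1 - phi2 &
      a = mu1 phi1 + mu2 phi2 + t21 (phi1 - phi2) - e1 - e2 - C].
pose p := fun x => p12 (join x 0).
have hsub : sublin p.
  split.
  - move=> x y; rewrite /p; have h := join_sub HX x y.
    have := hp12.2.2.1 _ (le_sub0 HX h); rewrite /= (linB lp12) (linD lp12); lra.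
  - by move=> c x c0; rewrite /p (join_scale HX _ c0) (linZ lp12).
have hbound : forall d a, G d a -> a <= p d.
  move=> _ _ [phi1 [phi2 [e1 [e2 [h1 h2 -> ->]]]]].
  set z := join (phi1 - phi2) 0.
  have hPz := hP phi1 phi2.
  rewrite (joinE HX phi1 phi2) (meetE HX phi1 phi2) -/z h1 h2 in hPz.
  have hA := conj_ge E1 mu1 (phi1 - z); have hB := conj_ge E2 mu2 (phi2 + z).
  rewrite hc1' in hA; rewrite hc2' in hB.
  move: hPz hA hB (E1n (phi1 - z)) (E2n (phi2 + z)).
  case: (E1 (phi1 - z)) => [ea||] //; case: (E2 (phi2 + z)) => [eb||] //=.
  move=> hPz hA hB _ _.
  rewrite -!EFinD !lee_fin in hPz hA hB.
  have hz0 : le 0 z := bl_join_r HX _ _.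
  have hdz : le 0 (z - (phi1 - phi2)) := le_sub0 HX (bl_join_l HX _ _).
  have := ht21a _ hdz; have := ht21b _ hz0.
  rewrite /p /p12 -/z /= (linB lt) (linB lt) (linB l1) (linD l2) in hA hB *.
  rewrite /C; lra.
have hne : exists d a, G d a.
  by exists (x1 - x2), (mu1 x1 + mu2 x2 + t21 (x1 - x2) - e1' - e2' - C), x1, x2, e1', e2'; split.
have hconv : forall d1 a1 d2 a2 t, G d1 a1 -> G d2 a2 -> 0 < t < 1 ->
     exists d a, [/\ G d a, d = t *: d1 + (1 - t) *: d2 & t * a1 + (1 - t) * a2 <= a].
  move=> _ _ _ _ t [phi1 [phi2 [e1 [e2 [h1 h2 -> ->]]]]] [psi1 [psi2 [f1 [f2 [k1 k2 -> ->]]]]] t01.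
  pose chi1 := t *: phi1 + (1 - t) *: psi1.
  pose chi2 := t *: phi2 + (1 - t) *: psi2.
  have hq1 := hc1 phi1 psi1 t t01; rewrite h1 k1 -!EFinM -EFinD in hq1.
  have hq2 := hc2 phi2 psi2 t t01; rewrite h2 k2 -!EFinM -EFinD in hq2.
  have [g1 hg1] := fin1 (E1n _) hq1.
  have [g2 hg2] := fin1 (E2n _) hq2.
  rewrite -/chi1 hg1 lee_fin in hq1; rewrite -/chi2 hg2 lee_fin in hq2.
  exists (chi1 - chi2), (mu1 chi1 + mu2 chi2 + t21 (chi1 - chi2) - g1 - g2 - C); split.
  - by exists chi1, chi2, g1, g2; split.
  - by rewrite /chi1 /chi2 !scalerBr opprD addrACA.
  - rewrite /chi1 /chi2 /C !(linB lt) !(linD l1) !(linD l2) !(linD lt) !(linZ l1) !(linZ l2) !(linZ lt).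
    nra.
have [s [slin sle sG]] := mazur_orlicz hsub hbound hne hconv.
have [M [M0 hM]] := dual_bound hp12d.
have sN : forall x, s (- x) = - s x := linN slin.
have hsd : is_dual s.
  apply: (dual_of_bound (M := M)) => // x.
  have hs1 : s x <= M * `|x|.
    apply: le_trans (sle x) _; rewrite /p.
    apply: le_trans (ler_norm _) _; apply: le_trans (hM _) _.
    by apply: ler_wpM2l; [exact: ltW | exact: norm_pos HX x].
  have hs2 : - s x <= M * `|x|.
    rewrite -sN; apply: le_trans (sle (- x)) _; rewrite /p.
    apply: le_trans (ler_norm _) _; apply: le_trans (hM _) _.
    rewrite -(normrN x).
    by apply: ler_wpM2l; [exact: ltW | exact: norm_pos HX (- x)].
  by rewrite ler_norml; apply/andP; split; lra.
exists p12, s; split => //; split.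
  split => //; split.
    move=> phi h0 /=.
    have := sle (- phi); rewrite /p (join_eq_r HX (le_neg0 HX h0)) (lin0 lp12) sN; lra.
  move=> phi h0.
  by have := sle phi; rewrite /p (join_eq_l HX h0).
rewrite hc1' hc2' -EFinD.
apply: conj_sum_le => //.
- by exists x1, e1'.
- by exists x2, e2'.
move=> y1 y2.
case hy1 : (E1 y1) => [f1||]; last by have := E1n y1.
  case hy2 : (E2 y2) => [f2||]; last by have := E2n y2.
    have hg : G (y1 - y2) (mu1 y1 + mu2 y2 + t21 (y1 - y2) - f1 - f2 - C).
      by exists y1, y2, f1, f2; split.
    have := sG _ _ hg; rewrite (linB slin) (linB lt) /C.
    by rewrite -!EFinB -EFinD lee_fin => h; lra.
  by rewrite /=; exact: leNye.
by rewrite /=; exact: leNye.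
Qed.

Theorem theorem2p49 (R : realType) (V : completeNormedModType R)
    (le : V -> V -> Prop) (meet join : V -> V -> V)
    (HX : is_banach_lattice le meet join) :
  (forall E1 E2 : V -> \bar R,
      proper_fun E1 -> convex_fun E1 -> proper_fun E2 -> convex_fun E2 ->
      lessP meet join E1 E2 ->
      lessQ le (conjugate E2) (conjugate E1)) /\
  (forall E : V -> \bar R,
      proper_fun E -> convex_fun E -> submodular meet join E ->
      substitutable le (conjugate E)).
Proof.
split.
  by move=> E1 E2 hp1 hc1 hp2 hc2 hP; exact (part1 HX hp1 hc1 hp2 hc2 hP).
by move=> E hp hc hs; exact (part1 HX hp hc hp hc hs).
Qed.
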